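(* Let $G$ be a graph with a tight clique cutset $Q$, let $H$ be a tight component of $G-Q$, and let $V_2 = V(G)\setminus V(H)$. Let $\ell \ge \chi(G)+1$ and let $\alpha,\beta$ be two $\ell$-colourings of $G$ whose restrictions to $V_2$ are equal. Suppose $H$ is $\ell_1$-mixing for every integer $\ell_1 \ge \chi(H)+1$. Then there is a path between $\alpha$ and $\beta$ in $\mathcal{R}_\ell(G)$.
   Context: All graphs are finite and simple. A $k$-colouring is a proper colouring with colours $\{1,\dots,k\}$; $\chi$ denotes chromatic number. $\mathcal{R}_k(G)$ has the $k$-colourings of $G$ as vertices, two being adjacent if they differ on exactly one vertex; $G$ is $k$-mixing if $\mathcal{R}_k(G)$ is connected. A clique cutset of $G$ is a clique $Q$ such that $G-Q$ has more components than $G$. A clique cutset $Q$ is tight if some component $H$ of $G-Q$ is complete to $Q$ (every vertex of $H$ adjacent to every vertex of $Q$); such an $H$ is a tight component. *)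

(* Defs.v *)
(* A simple graph is a symmetric irreflexive relation e on a finType T. *)
From mathcomp Require Import all_boot.
Set Implicit Arguments. Unset Strict Implicit. Unset Printing Implicit Defensive.

Section Graphs.
Variables (T : finType) (e : rel T).

(* a proper k-colouring; colours {1..k} are represented by 'I_k = {0..k-1} *)
Definition proper_col {k : nat} (c : {ffun T -> 'I_k}) : bool :=
  [forall x, forall y, e x y ==> (c x != c y)].

Definition colourable (k : nat) : bool := [exists c : {ffun T -> 'I_k}, proper_col c].

Definition chi : nat := find colourable (iota 0 #|T|.+1).

Definition recol_adj (k : nat) : rel {ffun T -> 'I_k} :=
  fun a b => [&& proper_col a, proper_col b & #|[set v | a v != b v]| == 1].

Definition mixing (k : nat) : Prop :=
  forall a b : {ffun T -> 'I_k}, proper_col a -> proper_col b -> connect (@recol_adj k) a b.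

(* edges of G[S] (other vertices become isolated) *)
Definition rel_on (S : {set T}) : rel T := fun x y => [&& x \in S, y \in S & e x y].

Definition ncomp (S : {set T}) : nat := n_comp (rel_on S) (mem S).

Definition is_component (S H : {set T}) : Prop :=
  exists2 x, x \in S & H = [set y | connect (rel_on S) x y].

Definition is_clique (Q : {set T}) : Prop :=
  forall x y, x \in Q -> y \in Q -> x != y -> e x y.

Definition clique_cutset (Q : {set T}) : Prop :=
  is_clique Q /\ ncomp setT < ncomp (~: Q).

Definition complete_to (H Q : {set T}) : Prop :=
  forall x y, x \in H -> y \in Q -> e x y.

End Graphs.
Arguments recol_adj {T} e k.

Definition induced (T : finType) (e : rel T) (S : {set T}) : rel {x : T | x \in S} :=
  fun x y => e (val x) (val y).
Arguments induced {T} e S _ _.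

(* Main.v *)
Require Import Defs.
From mathcomp Require Import all_boot zify.
Set Implicit Arguments. Unset Strict Implicit. Unset Printing Implicit Defensive.

Lemma colourable_card (U : finType) (r : rel U) : irreflexive r -> colourable r #|U|.
Proof.
move=> irr; apply/existsP; exists [ffun x => enum_rank x].
apply/forallP=> x; apply/forallP=> y; apply/implyP=> rxy; rewrite !ffunE.
apply/negP=> /eqP /enum_rank_inj exy; by rewrite exy irr in rxy.
Qed.

Lemma chi_le (U : finType) (r : rel U) k : irreflexive r -> colourable r k -> chi r <= k.
Proof.
move=> irr ck; rewrite /chi.
have key : forall j, j <= #|U| -> colourable r j ->
    find (colourable r) (iota 0 #|U|.+1) <= j.
  move=> j hj cj; rewrite leqNgt; apply/negP=> hlt.
  by have := before_find 0 hlt; rewrite nth_iota ?add0n ?cj // ltnS.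
case: (leqP k #|U|) => hk; first exact: key.
by apply: leq_trans (ltnW hk); apply: key => //; apply: colourable_card.
Qed.

Lemma chi_col (U : finType) (r : rel U) : irreflexive r -> colourable r (chi r).
Proof.
move=> irr; have hs : has (colourable r) (iota 0 #|U|.+1).
  apply/hasP; exists #|U|; first by rewrite mem_iota add0n ltnSn.
  exact: colourable_card.
have := nth_find 0 hs; rewrite nth_iota ?add0n //.
by have := hs; rewrite has_find size_iota.
Qed.

Lemma colourable_sub (U : finType) (r : rel U) m (c : {ffun U -> 'I_m}) (S : {set 'I_m}) :
  proper_col r c -> (forall x, c x \in S) -> colourable r #|S|.
Proof.
move=> pc hS; apply/existsP; exists [ffun x => enum_rank_in (hS x) (c x)].
apply/forallP=> x; apply/forallP=> y; apply/implyP=> rxy; rewrite !ffunE.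
have := forallP (forallP pc x) y; rewrite rxy /=; apply: contra => /eqP h.
by rewrite -(enum_rankK_in (hS x) (hS x)) h (enum_rankK_in (hS y) (hS y)).
Qed.

Lemma connect_map (A B : finType) (r : rel A) (r' : rel B) (f : A -> B) :
  (forall x y, r x y -> r' (f x) (f y)) -> forall x y, connect r x y -> connect r' (f x) (f y).
Proof.
move=> hf x y /connectP [p hp ->]; elim: p x hp => [|z p IH] x /=; first by rewrite connect0.
case/andP=> hxz hp; apply: connect_trans (connect1 (hf _ _ hxz)) (IH _ hp).
Qed.

Theorem lemma6 (T : finType) (e : rel T)
  (e_sym : symmetric e) (e_irr : irreflexive e)
  (Q H : {set T})
  (hQ : clique_cutset e Q)
  (hH : is_component e (~: Q) H)
  (htight : complete_to e H Q)
  (l : nat) (hl : chi e < l)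
  (a b : {ffun T -> 'I_l}) (ha : proper_col e a) (hb : proper_col e b)
  (hab : forall v, v \notin H -> a v = b v)
  (hmix : forall l1 : nat, chi (induced e H) < l1 -> mixing (induced e H) l1) :
  connect (recol_adj e l) a b.
Proof.
have prop : forall (k : nat) (c : {ffun T -> 'I_k}), proper_col e c -> forall x y, e x y -> c x != c y.
  by move=> k c pc x y exy; have := forallP (forallP pc x) y; rewrite exy.
have disj : forall x, x \in H -> x \notin Q.
  by move=> x hx; apply/negP=> hq; have := htight x x hx hq; rewrite e_irr.
have nbr : forall x y, x \in H -> e x y -> y \notin H -> y \in Q.
  move=> x y hx exy; apply: contraR => hyQ.
  have hxQ := disj x hx.
  case: hH => x0 hx0 defH; move: hx; rewrite defH !inE => hx.
  apply: connect_trans hx (connect1 _).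
  by rewrite /rel_on !inE hxQ exy andbT.
have Qinj : forall k (c : {ffun T -> 'I_k}), proper_col e c -> #|c @: Q| = #|Q|.
  move=> k c pc; apply: card_in_imset => q1 q2 h1 h2 eq12.
  apply/eqP; apply: contraT => ne.
  by have := prop _ _ pc _ _ (hQ.1 _ _ h1 h2 ne); rewrite eq12 eqxx.
have irrH : irreflexive (induced e H) by move=> x; apply: e_irr.
have [c pc] : exists c : {ffun T -> 'I_(chi e)}, proper_col e c.
  by have /existsP [c pc] := chi_col e_irr; exists c.
set K := ~: (c @: Q).
have cK : forall x : {x | x \in H}, [ffun x : {x | x \in H} => c (val x)] x \in K.
  move=> x; rewrite ffunE in_setC; apply/imsetP=> [[q hq eqq]].
  by have := prop _ _ pc _ _ (htight _ _ (valP x) hq); rewrite eqq eqxx.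
have pcH : proper_col (induced e H) [ffun x : {x | x \in H} => c (val x)].
  apply/forallP=> x; apply/forallP=> y; apply/implyP=> exy; rewrite !ffunE.
  exact: prop _ _ pc _ _ exy.
have chiH : chi (induced e H) <= #|K| := chi_le irrH (colourable_sub pcH cK).
have cardK : #|K| + #|Q| = chi e by rewrite -(Qinj _ _ pc) addnC cardsC card_ord.
set L := ~: (a @: Q).
have cardL : #|L| + #|a @: Q| = l by rewrite addnC cardsC card_ord.
have aQ := leq_imset_card a Q.
have hLt : chi (induced e H) < #|L|. by lia.
have aL : forall x : {x | x \in H}, a (val x) \in L.
  move=> x; rewrite in_setC; apply/imsetP=> [[q hq eqq]].
  by have := prop _ _ ha _ _ (htight _ _ (valP x) hq); rewrite eqq eqxx.
have bL : forall x : {x | x \in H}, b (val x) \in L.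
  move=> x; rewrite in_setC; apply/imsetP=> [[q hq eqq]].
  rewrite (hab q) in eqq; last by apply/negP=> /disj; rewrite hq.
  by have := prop _ _ hb _ _ (htight _ _ (valP x) hq); rewrite eqq eqxx.
pose a' := [ffun x => enum_rank_in (aL x) (a (val x))].
pose b' := [ffun x => enum_rank_in (bL x) (b (val x))].
have pa' : proper_col (induced e H) a'.
  apply/forallP=> x; apply/forallP=> y; apply/implyP=> exy; rewrite !ffunE.
  apply: contraTneq (prop _ _ ha _ _ exy) => h.
  by rewrite -(enum_rankK_in (aL x) (aL x)) h (enum_rankK_in (aL y) (aL y)) eqxx.
have pb' : proper_col (induced e H) b'.
  apply/forallP=> x; apply/forallP=> y; apply/implyP=> exy; rewrite !ffunE.
  apply: contraTneq (prop _ _ hb _ _ exy) => h.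
  by rewrite -(enum_rankK_in (bL x) (bL x)) h (enum_rankK_in (bL y) (bL y)) eqxx.
pose lift (g : {ffun {x | x \in H} -> 'I_#|L|}) : {ffun T -> 'I_l} :=
  [ffun v => if (insub v : option {x | x \in H}) is Some x then enum_val (g x) else a v].
have liftH : forall g v (hv : v \in H), lift g v = enum_val (g (Sub v hv)).
  by move=> g v hv; rewrite ffunE insubT.
have liftN : forall g v, v \notin H -> lift g v = a v.
  by move=> g v hv; rewrite ffunE insubF //; apply/negbTE.
have liftL : forall g v, v \in H -> lift g v \in L.
  by move=> g v hv; rewrite (liftH g v hv) enum_valP.
have plift : forall g, proper_col (induced e H) g -> proper_col e (lift g).
  move=> g pg; apply/forallP=> x; apply/forallP=> y; apply/implyP=> exy.
  have nL : forall u w, u \in H -> w \notin H -> e u w -> lift g u != lift g w.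
    move=> u w hu hw euw; rewrite (liftN g w hw); apply/eqP=> equ.
    have := liftL g u hu; rewrite equ in_setC imset_f //; exact: nbr hu euw hw.
  case hx: (x \in H); case hy: (y \in H).
  - rewrite (liftH g x hx) (liftH g y hy) (inj_eq (@enum_val_inj _ _)).
    by have := forallP (forallP pg (Sub x hx)) (Sub y hy); rewrite /induced !SubK exy.
  - by apply: nL => //; rewrite hy.
  - by rewrite eq_sym; apply: nL => //; [rewrite hx | rewrite e_sym].
  - by rewrite !liftN ?hx ?hy //; apply: prop _ _ ha _ _ exy.
have la : lift a' = a.
  apply/ffunP=> v; case hv: (v \in H).
    by rewrite (liftH a' v hv) ffunE (enum_rankK_in _ (aL _)).
  by rewrite liftN ?hv.
have lb : lift b' = b.
  apply/ffunP=> v; case hv: (v \in H).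
    by rewrite (liftH b' v hv) ffunE (enum_rankK_in _ (bL _)).
  by rewrite liftN ?hv // hab ?hv.
rewrite -la -lb; apply: (@connect_map _ _ (recol_adj (induced e H) #|L|)); last exact: hmix.
move=> g1 g2 /and3P [p1 p2 hc]; rewrite /recol_adj plift // plift //=.
suff -> : [set v | lift g1 v != lift g2 v] = val @: [set x | g1 x != g2 x].
  by rewrite card_imset //; apply: val_inj.
apply/setP=> v; rewrite inE; case hv: (v \in H).
  rewrite (liftH g1 v hv) (liftH g2 v hv) (inj_eq (@enum_val_inj _ _)).
  by rewrite -[v in RHS]/(val (Sub v hv : {x | x \in H})) mem_imset ?inE //; apply: val_inj.
rewrite !liftN ?hv // eqxx; apply/esym/imsetP=> [[x _ hxv]].
by move: hv; rewrite hxv (valP x).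
Qed.
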